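(* Let $\textbf{F}$ be a $gH$-differentiable IVF on a nonempty subset $\mathcal{X}$ of $\mathbb{R}^n$. If $\bar{x}\in\mathcal{X}$ is an efficient solution of the problem $\min_{x\in\mathcal{X}}\textbf{F}(x)$, then $0\in D_i\textbf{F}(\bar{x})$ for each $i\in\{1,2,\dots,n\}$.
   Context: $I(\mathbb{R})$: closed bounded intervals $\textbf{A}=[\underline{a},\overline{a}]$ with Moore arithmetic ($\oplus$ endpointwise; $\lambda\odot\textbf{A}=[\lambda\underline{a},\lambda\overline{a}]$ if $\lambda\ge0$, $[\lambda\overline{a},\lambda\underline{a}]$ if $\lambda<0$); $gH$-difference $\textbf{A}\ominus_{gH}\textbf{B}=[\min\{\underline{a}-\underline{b},\overline{a}-\overline{b}\},\max\{\underline{a}-\underline{b},\overline{a}-\overline{b}\}]$; limits in the norm $\max\{|\underline{a}|,|\overline{a}|\}$. $\textbf{A}\prec\textbf{B}$ iff $\underline{a}\le\underline{b}$, $\overline{a}\le\overline{b}$ and $\textbf{A}\ne\textbf{B}$; $\nprec$ is its negation. An IVF is $\textbf{F}(x)=[\underline{f}(x),\overline{f}(x)]$. $D_i\textbf{F}(\bar{x})=\lim_{h\to0}\frac1h\odot(\textbf{F}(\bar{x}+he_i)\ominus_{gH}\textbf{F}(\bar{x}))$. Linear IVF: $\textbf{L}(x)=\bigoplus_i x_i\odot\textbf{L}(e_i)$. $\textbf{F}$ is $gH$-differentiable at $\bar{x}$ if there exist a linear IVF $\textbf{L}_{\bar{x}}$, an IVF $\textbf{E}(\textbf{F}(\bar{x});d)$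 and $\delta>0$ with $(\textbf{F}(\bar{x}+d)\ominus_{gH}\textbf{F}(\bar{x}))\ominus_{gH}\textbf{L}_{\bar{x}}(d)=\lVert d\rVert\odot\textbf{E}(\textbf{F}(\bar{x});d)$ for $\lVert d\rVert<\delta$ and $\textbf{E}\to\textbf{0}$ as $\lVert d\rVert\to0$; on $\mathcal{X}$ means at every point. $\bar{x}$ is an efficient solution of $\min_{x\in\mathcal{X}}\textbf{F}(x)$ if $\textbf{F}(x)\nprec\textbf{F}(\bar{x})$ for all $x\in\mathcal{X}$, $x\ne\bar{x}$. *)

(* Defs.v *)
From HB Require Import structures.
From mathcomp Require Import all_boot all_order all_algebra.
From mathcomp Require Import reals.
Set Implicit Arguments. Unset Strict Implicit. Unset Printing Implicit Defensive.
Import Order.TTheory GRing.Theory Num.Theory.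
Local Open Scope ring_scope.

Section IVF.
Variable R : realType.
Variable n : nat.

(* A closed bounded interval [lo, hi]; closedness (lo <= hi) of the values of
   an IVF is imposed as a hypothesis where needed. *)
Record itv := Itv { lo : R; hi : R }.

Definition itv_add (A B : itv) : itv := Itv (lo A + lo B) (hi A + hi B).

Definition itv_scale (l : R) (A : itv) : itv :=
  if 0 <= l then Itv (l * lo A) (l * hi A) else Itv (l * hi A) (l * lo A).

Definition gHdiff (A B : itv) : itv :=
  Itv (Num.min (lo A - lo B) (hi A - hi B)) (Num.max (lo A - lo B) (hi A - hi B)).

Definition itv_norm (A : itv) : R := Num.max `|lo A| `|hi A|.

Definition itv0 : itv := Itv 0 0.

Definition itv_prec (A B : itv) : Prop := lo A <= lo B /\ hi A <= hi B /\ A <> B.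

Definition itv_mem (r : R) (A : itv) : Prop := lo A <= r /\ r <= hi A.

Definition vnorm (d : 'rV[R]_n) : R := Num.sqrt (\sum_(i < n) d 0 i ^+ 2).

Definition unitv (i : 'I_n) : 'rV[R]_n := \row_(j < n) (j == i)%:R.

Definition itv_lim0 (g : R -> itv) (A : itv) : Prop :=
  forall eps : R, 0 < eps -> exists del : R, 0 < del /\
    forall h : R, 0 < `|h| < del -> itv_norm (gHdiff (g h) A) < eps.

Definition is_partial_gH (F : 'rV[R]_n -> itv) (xb : 'rV[R]_n) (i : 'I_n) (D : itv) : Prop :=
  itv_lim0 (fun h => itv_scale h^-1 (gHdiff (F (xb + h *: unitv i)) (F xb))) D.

(* linear IVF  L(x) = (+)_i x_i (.) L(e_i), determined by the intervals Ls i = L(e_i) *)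
Definition linIVF (Ls : 'I_n -> itv) (x : 'rV[R]_n) : itv :=
  \big[itv_add/itv0]_(i < n) itv_scale (x 0 i) (Ls i).

(* gH-differentiability at xb, for F defined on X: F(xb + d) must make sense
   for ||d|| < delta, i.e. the ball of radius delta around xb lies in X. *)
Definition gH_diff_at (X : 'rV[R]_n -> Prop) (F : 'rV[R]_n -> itv) (xb : 'rV[R]_n) : Prop :=
  exists (Ls : 'I_n -> itv) (E : 'rV[R]_n -> itv) (del : R),
    0 < del /\
    (forall d, vnorm d < del -> X (xb + d)) /\
    (forall d, vnorm d < del ->
       gHdiff (gHdiff (F (xb + d)) (F xb)) (linIVF Ls d) = itv_scale (vnorm d) (E d)) /\
    (forall eps : R, 0 < eps -> exists eta : R, 0 < eta /\
       forall d, 0 < vnorm d < eta -> itv_norm (E d) < eps).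

Definition gH_diff_on (X : 'rV[R]_n -> Prop) (F : 'rV[R]_n -> itv) : Prop :=
  forall x, X x -> gH_diff_at X F x.

Definition efficient (X : 'rV[R]_n -> Prop) (F : 'rV[R]_n -> itv) (xb : 'rV[R]_n) : Prop :=
  X xb /\ forall x, X x -> x <> xb -> ~ itv_prec (F x) (F xb).

End IVF.

(* Main.v *)
Require Import Defs.
From HB Require Import structures.
From mathcomp Require Import all_boot all_order all_algebra.
From mathcomp Require Import reals.
From mathcomp Require Import lra.
Import Order.TTheory GRing.Theory Num.Theory.
Local Open Scope ring_scope.

Lemma itv_eta {R : realType} (A : itv R) : A = Itv (lo A) (hi A).
Proof. by case: A. Qed.

Lemma gHdiffE (R : realType) (A B : itv R) :
  gHdiff A B = Itv (Num.min (lo A - lo B) (hi A - hi B)) (Num.max (lo A - lo B) (hi A - hi B)).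
Proof. reflexivity. Qed.

Lemma itv_normE (R : realType) (A : itv R) : itv_norm A = Num.max `|lo A| `|hi A|.
Proof. reflexivity. Qed.

Lemma itv_scaleE (R : realType) (l : R) (A : itv R) :
  itv_scale l A = if 0 <= l then Itv (l * lo A) (l * hi A) else Itv (l * hi A) (l * lo A).
Proof. reflexivity. Qed.

Lemma lo_scale_neg (R : realType) (h : R) (A : itv R) : h < 0 ->
  lo (itv_scale h^-1 A) = h^-1 * hi A.
Proof. by move=> hs; rewrite itv_scaleE invr_ge0 leNgt hs. Qed.

Lemma hi_scale_pos (R : realType) (h : R) (A : itv R) : 0 < h ->
  hi (itv_scale h^-1 A) = h^-1 * hi A.
Proof. by move=> hs; rewrite itv_scaleE invr_ge0 (ltW hs). Qed.

Lemma norm_gH (R : realType) (A B : itv R) :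
  itv_norm (gHdiff A B) = Num.max `|lo A - lo B| `|hi A - hi B|.
Proof.
rewrite itv_normE gHdiffE /=.
set a := lo A - lo B; set b := hi A - hi B.
case: (leP a b) => h //; exact: maxC.
Qed.

Lemma unit_entry (R : realType) n (i j : 'I_n) (h : R) :
  (h *: unitv R i) 0 j = h * (j == i)%:R.
Proof. by rewrite !mxE. Qed.

Lemma lin_unit (R : realType) n (Ls : 'I_n -> itv R) i (h : R) :
  linIVF Ls (h *: unitv R i) = itv_scale h (Ls i).
Proof.
have Hlo : lo (linIVF Ls (h *: unitv R i)) =
   \sum_(j < n) lo (itv_scale ((h *: unitv R i) 0 j) (Ls j)).
  by rewrite /linIVF; apply: (big_morph (@lo R)).
have Hhi : hi (linIVF Ls (h *: unitv R i)) =
   \sum_(j < n) hi (itv_scale ((h *: unitv R i) 0 j) (Ls j)).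
  by rewrite /linIVF; apply: (big_morph (@hi R)).
have z0 : forall j, j != i -> itv_scale ((h *: unitv R i) 0 j) (Ls j) = itv0 R.
  move=> j hj; rewrite unit_entry (negbTE hj) mulr0 itv_scaleE lexx.
  by rewrite !mul0r.
rewrite (bigD1 i) //= big1 ?addr0 in Hlo; last by move=> j hj; rewrite z0.
rewrite (bigD1 i) //= big1 ?addr0 in Hhi; last by move=> j hj; rewrite z0.
rewrite unit_entry eqxx mulr1 in Hlo Hhi.
by rewrite (itv_eta (linIVF Ls (h *: unitv R i))) Hlo Hhi -itv_eta.
Qed.

Lemma vnorm_unit (R : realType) n (i : 'I_n) (h : R) : vnorm (h *: unitv R i) = `|h|.
Proof.
rewrite /vnorm (bigD1 i) //= big1 ?addr0; last first.
  by move=> j hj; rewrite unit_entry (negbTE hj) mulr0 expr0n.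
by rewrite unit_entry eqxx mulr1 sqrtr_sqr.
Qed.

Lemma neg_prec (R : realType) (A B : itv R) :
  hi (gHdiff A B) < 0 -> itv_prec A B.
Proof.
rewrite gHdiffE /= gt_max => /andP[h1 h2].
rewrite subr_lt0 in h1; rewrite subr_lt0 in h2.
split; first exact: ltW.
split; first exact: ltW.
by move=> E; rewrite E ltxx in h1.
Qed.

Section Main.
Variables (R : realType) (n : nat) (X : 'rV[R]_n -> Prop) (F : 'rV[R]_n -> itv R).
Variables (xb : 'rV[R]_n) (i : 'I_n) (Ls : 'I_n -> itv R) (E : 'rV[R]_n -> itv R) (del : R).
Hypothesis hdel : 0 < del.
Hypothesis heq : forall d, vnorm d < del ->
       gHdiff (gHdiff (F (xb + d)) (F xb)) (linIVF Ls d) = itv_scale (vnorm d) (E d).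
Hypothesis hE : forall eps : R, 0 < eps -> exists eta : R, 0 < eta /\
       forall d, 0 < vnorm d < eta -> itv_norm (E d) < eps.

Let G h := gHdiff (F (xb + h *: unitv R i)) (F xb).
Let S h := itv_scale h^-1 (G h).

Lemma keyP (eps : R) : 0 < eps -> exists eta : R, 0 < eta /\
  forall h : R, 0 < `|h| < eta ->
    `|lo (S h) - lo (Ls i)| < eps /\ `|hi (S h) - hi (Ls i)| < eps.
Proof.
move=> he; have [eta [heta Heta]] := hE eps he.
exists (Num.min eta del); split; first by rewrite lt_min heta hdel.
move=> h /andP[h0]; rewrite lt_min => /andP[h1 h2].
have := heq (h *: unitv R i); rewrite vnorm_unit lin_unit => /(_ h2) Hq.
have Hn := congr1 (@itv_norm R) Hq.
rewrite norm_gH in Hn.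
have HE : itv_norm (E (h *: unitv R i)) < eps.
  by apply: Heta; rewrite vnorm_unit h0 h1.
have Hsc : itv_norm (itv_scale `|h| (E (h *: unitv R i))) < `|h| * eps.
  rewrite itv_scaleE normr_ge0 !itv_normE /= !normrM normr_id -maxr_pMr //.
  by rewrite ltr_pM2l.
rewrite -Hn gt_max in Hsc; case/andP: Hsc => Ha Hb.
have hne : h != 0 by rewrite -normr_gt0.
have key : forall g l : R, `|g - h * l| < `|h| * eps -> `|g / h - l| < eps.
  move=> g l H.
  have -> : g / h - l = (g - h * l) / h.
    by rewrite mulrBl mulrAC divff // mul1r.
  by rewrite normrM normrV ?unitfE // ltr_pdivrMr ?normr_gt0 // [eps * _]mulrC.
rewrite /S itv_scaleE invr_ge0.
rewrite itv_scaleE in Ha Hb.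
case: (leP 0 h) => hs /=.
  rewrite hs /= in Ha Hb.
  by split; rewrite [_^-1 * _]mulrC; apply: key.
rewrite leNgt hs /= in Ha Hb.
by split; rewrite [_^-1 * _]mulrC; apply: key.
Qed.

End Main.

Theorem corollary4p1 (R : realType) (n : nat) (X : 'rV[R]_n -> Prop)
    (F : 'rV[R]_n -> itv R)
    (hX : exists x, X x)
    (hF : forall x, X x -> lo (F x) <= hi (F x))
    (hdiff : gH_diff_on X F)
    (xb : 'rV[R]_n) (hxb : efficient X F xb) :
  forall i : 'I_n, exists D : itv R, is_partial_gH F xb i D /\ itv_mem 0 D.
Proof.
move=> i; case: hxb => Xxb Heff.
have [Ls [E [del [hdel [hX' [heq hE]]]]]] := hdiff xb Xxb.
have KP := @keyP R n F xb i Ls E del hdel heq hE.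
exists (Ls i); split.
  move=> eps he; have [eta [heta H]] := KP eps he.
  exists eta; split => // h hh; rewrite norm_gH gt_max.
  by case: (H h hh) => -> ->.
have noprec : forall h : R, h != 0 -> `|h| < del ->
    ~ (hi (gHdiff (F (xb + h *: unitv R i)) (F xb)) < 0).
  move=> h hne hd hneg.
  apply: (Heff (xb + h *: unitv R i)).
  - by apply: hX'; rewrite vnorm_unit.
  - move=> Hx; have := congr1 (fun v : 'rV[R]_n => v 0 i) Hx.
    rewrite /= mxE unit_entry eqxx mulr1 => /eqP.
    by rewrite -subr_eq0 addrAC subrr add0r (negbTE hne).
  - exact: neg_prec.
rewrite /itv_mem.
have Hsc : forall h : R, itv_scale h^-1 (gHdiff (F (xb + h *: unitv R i)) (F xb)) =
   itv_scale h^-1 (gHdiff (F (xb + h *: unitv R i)) (F xb)) by [].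
case: (leP (lo (Ls i)) 0) => hl1; last first.
  exfalso.
  have [eta [heta H]] := KP _ hl1.
  have hm : 0 < Num.min eta del by rewrite lt_min heta hdel.
  set m := Num.min eta del in hm.
  have hmeta : m <= eta by rewrite /m ge_min lexx.
  have hmdel : m <= del by rewrite /m ge_min lexx orbT.
  set h := - (m / 2).
  have hlt : h < 0 by rewrite /h oppr_lt0 divr_gt0.
  have hab : `|h| = m / 2 by rewrite /h normrN gtr0_norm // divr_gt0.
  have hsm : m / 2 < m by rewrite ltr_pdivrMr // ltr_pMr // ltr1n.
  have hh : 0 < `|h| < eta by rewrite hab divr_gt0 //= (lt_le_trans hsm hmeta).
  have [Hl _] := H h hh.
  rewrite lo_scale_neg // in Hl.
  apply: (noprec h); first by rewrite -normr_gt0 hab divr_gt0.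
    by rewrite hab (lt_le_trans hsm hmdel).
  move: Hl; set g := hi _ => Hl.
  have hinv : h^-1 < 0 by rewrite invr_lt0.
  have h1 : lo (Ls i) - h^-1 * g <= `|h^-1 * g - lo (Ls i)|.
    by rewrite distrC ler_norm.
  have h2 : 0 < h^-1 * g by lra.
  nra.
split => //; case: (leP 0 (hi (Ls i))) => hl2 //; exfalso.
have hl2' : 0 < - hi (Ls i) by rewrite oppr_gt0.
have [eta [heta H]] := KP _ hl2'.
have hm : 0 < Num.min eta del by rewrite lt_min heta hdel.
set m := Num.min eta del in hm.
have hmeta : m <= eta by rewrite /m ge_min lexx.
have hmdel : m <= del by rewrite /m ge_min lexx orbT.
set h := m / 2.
have hgt : 0 < h by rewrite /h divr_gt0.
have hab : `|h| = m / 2 by rewrite gtr0_norm.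
have hsm : m / 2 < m by rewrite ltr_pdivrMr // ltr_pMr // ltr1n.
have hh : 0 < `|h| < eta by rewrite hab divr_gt0 //= (lt_le_trans hsm hmeta).
have [_ Hl] := H h hh.
rewrite hi_scale_pos // in Hl.
apply: (noprec h); first by rewrite -normr_gt0 hab divr_gt0.
  by rewrite hab (lt_le_trans hsm hmdel).
move: Hl; set g := hi _ => Hl.
have hinv : 0 < h^-1 by rewrite invr_gt0.
have h1 : h^-1 * g - hi (Ls i) <= `|h^-1 * g - hi (Ls i)| by rewrite ler_norm.
have h2 : h^-1 * g < 0 by lra.
nra.
Qed.
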